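(* Let $n,p\in\mathbb{N}$ with $p\ge1$ and $n\ge p+1$, and let $\bm\alpha=(\alpha_0,\dots,\alpha_p)\in\mathbb{R}^{p+1}$. For $j=1,\dots,n$ let $\bm u_j$ have components $u_{i,j}=\sqrt{\tfrac{4}{2n+1}}\sin\!\big(\tfrac{i(2j-1)\pi}{2n+1}\big)$, $i=1,\dots,n$. Then $\big(T_n^{\bm\alpha}+H_n^{\bm\alpha,2,1}\big)\bm u_j=\lambda_j\bm u_j$ with $\lambda_j=g_p^{\bm\alpha}\big(\tfrac{(2j-1)\pi}{2n+1}\big)$, and these are all the eigenvalues of $T_n^{\bm\alpha}+H_n^{\bm\alpha,2,1}$.
   Context: Convention $\alpha_k=0$ for $k>p$. $T_n^{\bm\alpha}$ is the $n\times n$ symmetric banded Toeplitz matrix with $(T_n^{\bm\alpha})_{i,j}=\alpha_{|i-j|}$. $H_n^{\bm\alpha,2,1}$ is the $n\times n$ matrix with $(H_n^{\bm\alpha,2,1})_{i,j}=-\alpha_{i+j}+\alpha_{2n+1-i-j}$ (so its top-left corner is $-\alpha_2,-\alpha_3,\dots$ on successive antidiagonals and its bottom-right corner is $\alpha_1,\alpha_2,\dots$). $g_p^{\bm\alpha}(\theta)=\alpha_0+2\sum_{k=1}^p\alpha_k\cos(k\theta)$. *)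

(* Defs.v *)
From HB Require Import structures.
From mathcomp Require Import all_boot all_order all_algebra.
From mathcomp Require Import all_classical all_reals all_analysis.
Set Implicit Arguments. Unset Strict Implicit. Unset Printing Implicit Defensive.
Import Order.TTheory GRing.Theory Num.Theory.
Local Open Scope ring_scope.

(* alpha_k for k : nat, with the convention alpha_k = 0 for k > p. *)
Definition alphaE (R : realType) (p : nat) (alpha : 'I_p.+1 -> R) (k : nat) : R :=
  match @insub nat (fun k => (k < p.+1)%N) _ k with
  | Some i => alpha i
  | None => 0
  end.

(* Matrices use 0-based indices i0 j0 : 'I_n; the paper's 1-based index is i0.+1. *)

(* T_n^alpha : (i,j) |-> alpha_{|i-j|} *)
Definition Toep (R : realType) (p n : nat) (alpha : 'I_p.+1 -> R) : 'M[R]_n :=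
  \matrix_(i < n, j < n) alphaE alpha (i - j + (j - i))%N.

Definition Hank (R : realType) (p n : nat) (alpha : 'I_p.+1 -> R) : 'M[R]_n :=
  \matrix_(i < n, j < n)
    (- alphaE alpha (i.+1 + j.+1)%N + alphaE alpha ((2 * n).+1 - i.+1 - j.+1)%N).

Definition gsym (R : realType) (p : nat) (alpha : 'I_p.+1 -> R) (theta : R) : R :=
  alphaE alpha 0 + 2 * \sum_(1 <= k < p.+1) alphaE alpha k * cos (k%:R * theta).

Definition uvec (R : realType) (n : nat) (j0 : 'I_n) : 'cV[R]_n :=
  \col_(i < n) (Num.sqrt (4 / (2 * n).+1%:R) *
     sin ((i.+1)%:R * ((2 * j0.+1).-1)%:R * pi / (2 * n).+1%:R)).

Definition lam (R : realType) (p n : nat) (alpha : 'I_p.+1 -> R) (j0 : 'I_n) : R :=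
  gsym alpha (((2 * j0.+1).-1)%:R * pi / (2 * n).+1%:R).

Definition is_eigenvalue (R : realType) (n : nat) (A : 'M[R]_n) (a : R) : Prop :=
  exists2 v : 'cV[R]_n, v != 0 & A *m v = a *: v.

(* Main.v *)
Require Import Defs.
From HB Require Import structures.
From mathcomp Require Import all_boot all_order all_algebra.
From mathcomp Require Import all_classical all_reals all_analysis.
From mathcomp Require Import zify ring lra.
Import Order.TTheory GRing.Theory Num.Theory.
Local Open Scope ring_scope.

Section Aux.
Variable R : realType.

Lemma sin_natpi (k : nat) : sin (k%:R * pi) = 0 :> R.
Proof.
elim: k => [|k IH]; first by rewrite mul0r sin0.
by rewrite -addn1 natrD mulrDl mul1r sinDpi IH oppr0.
Qed.

Lemma cos_natpi (k : nat) : cos (k%:R * pi) = (-1) ^+ k :> R.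
Proof.
elim: k => [|k IH]; first by rewrite mul0r cos0 expr0.
by rewrite -addn1 natrD mulrDl mul1r cosDpi IH exprD expr1 mulrN1.
Qed.

Lemma sum_if_eq n (c : nat) (F : nat -> R) :
  \sum_(j < n) (if (j : nat) == c then F j else 0) = if (c < n)%N then F c else 0.
Proof.
elim: n => [|n IH]; first by rewrite big_ord0.
rewrite big_ord_recr /= IH.
have [h|h|->] := ltngtP c n.
- rewrite addr0 ifT //; lia.
- rewrite ifF; last lia. rewrite ?addr0 //.
- by rewrite add0r ltnSn.
Qed.

Lemma alphaE_gt (p : nat) (alpha : 'I_p.+1 -> R) k : (p < k)%N -> alphaE alpha k = 0.
Proof. move=> h; rewrite /alphaE insubF //; apply/negbTE; lia. Qed.


Ltac brute := repeat (case: eqP => ?); repeat (case: leqP => ?);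
  rewrite ?addr0 ?add0r //; try (exfalso; lia).

Lemma P1 (i k j : nat) (F : nat -> R) : (0 < k)%N ->
  (if (i - j + (j - i) == k)%N then F j else 0) =
  (if j == (i + k)%N then F j else 0) + (if j == (i - k)%N then (if (k <= i)%N then F j else 0) else 0).
Proof. move=> hk; brute. Qed.

Lemma P1' (i j : nat) (F : nat -> R) :
  (if (i - j + (j - i) == 0)%N then F j else 0) = (if j == i then F j else 0).
Proof. brute. Qed.

Lemma P2 (i k j : nat) (F : nat -> R) :
  (if (i.+1 + j.+1 == k)%N then F j else 0) =
  (if j == (k - i.+2)%N then (if (i.+2 <= k)%N then F j else 0) else 0).
Proof. brute. Qed.

Lemma P3 (m i k j : nat) (F : nat -> R) : (j < m)%N -> (i < m)%N ->
  (if ((2 * m).+1 - i.+1 - j.+1 == k)%N then F j else 0) =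
  (if j == ((2 * m).-1 - i - k)%N then (if (i + k <= (2 * m).-1)%N then F j else 0) else 0).
Proof. move=> hj hi; brute. Qed.


Lemma if_false (b : bool) (x : R) : ~~ b -> (if b then x else 0) = 0.
Proof. by move/negbTE->. Qed.

Section Coef.
Variables (m : nat) (w : nat -> R).
Hypothesis hw0 : w 0 = 0.
Hypothesis hws : forall q, (q <= (2 * m).+1)%N -> w ((2 * m).+1 - q) = w q.

Definition C (i k : nat) :=
  \sum_(j < m) (if (i - j + (j - i) == k)%N then w j.+1 else 0)
  - \sum_(j < m) (if (i.+1 + j.+1 == k)%N then w j.+1 else 0)
  + \sum_(j < m) (if ((2 * m).+1 - i.+1 - j.+1 == k)%N then w j.+1 else 0).

Lemma coef0 i : (i < m)%N -> C i 0 = w i.+1.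
Proof.
move=> hi; rewrite /C.
under eq_bigr => j _ do rewrite (P1' i j (fun j => w j.+1)).
have -> : \sum_(j < m) (if (i.+1 + j.+1 == 0)%N then w j.+1 else 0) = 0.
  by apply: big1.
have -> : \sum_(j < m) (if ((2 * m).+1 - i.+1 - j.+1 == 0)%N then w j.+1 else 0) = 0.
  by apply: big1 => j _; apply: if_false; apply/eqP; move: (ltn_ord j); lia.
by rewrite (sum_if_eq m i (fun j => w j.+1)) hi subr0 addr0.
Qed.

Lemma coefk i k : (i < m)%N -> (0 < k)%N -> (k < m)%N ->
  C i k = w (i.+1 + k) + (if (k <= i.+1)%N then w (i.+1 - k) else - w (k - i.+1)).
Proof.
move=> hi hk hkm; rewrite /C.
under eq_bigr => j _ do rewrite (P1 i k j (fun j => w j.+1)) //.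
under [X in _ - X]eq_bigr => j _ do rewrite (P2 i k j (fun j => w j.+1)).
under [X in _ + X]eq_bigr => j _ do rewrite (@P3 m i k j (fun j => w j.+1) (ltn_ord j) hi).
rewrite big_split /=.
rewrite (sum_if_eq m (i + k) (fun j => w j.+1)).
rewrite (sum_if_eq m (i - k) (fun j => if (k <= i)%N then w j.+1 else 0)).
rewrite (sum_if_eq m (k - i.+2) (fun j => if (i.+2 <= k)%N then w j.+1 else 0)).
rewrite (sum_if_eq m ((2 * m).-1 - i - k) (fun j => if (i + k <= (2 * m).-1)%N then w j.+1 else 0)).
have e1 : (i - k < m)%N by lia.
have e2 : (k - i.+2 < m)%N by lia.
have e3 : (i + k <= (2 * m).-1)%N by lia.
rewrite e1 e2 e3.
have -> : w (i + k).+1 = w (i.+1 + k) by congr w; lia.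
have -> : w ((2 * m).-1 - i - k).+1 = w (i.+1 + k).
  rewrite (_ : ((2 * m).-1 - i - k).+1 = (2 * m).+1 - (i.+1 + k))%N; last lia.
  by rewrite hws //; lia.
have [h2|h2|h2] := ltngtP k i.+1.
- have -> : w (i - k).+1 = w (i.+1 - k) by congr w; lia.
  by repeat case: ifPn => ?; try (exfalso; lia); lra.
- have -> : w (k - i.+2).+1 = w (k - i.+1) by congr w; lia.
  by repeat case: ifPn => ?; try (exfalso; lia); lra.
- rewrite h2 subnn hw0.
  by repeat case: ifPn => ?; try (exfalso; lia); lra.
Qed.
End Coef.

Lemma trig_k (t : R) (a b : nat) :
  sin ((a + b)%N%:R * t) + (if (b <= a)%N then sin ((a - b)%N%:R * t) else - sin ((b - a)%N%:R * t))
  = 2 * cos (b%:R * t) * sin (a%:R * t).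
Proof.
have -> : (if (b <= a)%N then sin ((a - b)%N%:R * t) else - sin ((b - a)%N%:R * t))
          = sin ((a%:R - b%:R) * t).
  case: leqP => h; first by rewrite natrB.
  by rewrite natrB ?(ltnW h) // -sinN -mulNr opprB.
rewrite natrD mulrDl mulrBl sinD sinB; ring.
Qed.

Lemma w_sym (c m q : nat) : odd c -> (q <= (2 * m).+1)%N ->
  sin (((2 * m).+1 - q)%N%:R * (c%:R * pi / (2 * m).+1%:R)) =
  sin (q%:R * (c%:R * pi / (2 * m).+1%:R)) :> R.
Proof.
move=> hc hq; rewrite natrB // mulrBl.
have hD : (2 * m).+1%:R != 0 :> R by rewrite pnatr_eq0.
have -> : (2 * m).+1%:R * (c%:R * pi / (2 * m).+1%:R) = c%:R * pi :> R.
  by rewrite mulrC divfK.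
rewrite sinB sin_natpi cos_natpi.
have -> : (-1) ^+ c = -1 :> R.
  by rewrite -signr_odd hc expr1.
by rewrite mul0r mulN1r opprK add0r.
Qed.

Lemma swap (m N : nat) (a : nat -> R) (f : nat -> nat) (W : nat -> R) :
  (forall l, (l < m)%N -> (f l < N)%N) ->
  \sum_(l < m) a (f l) * W l = \sum_(k < N) a k * \sum_(l < m) (if f l == k then W l else 0).
Proof.
move=> hf.
under [RHS]eq_bigr => k _ do rewrite mulr_sumr.
rewrite exchange_big /=; apply: eq_bigr => l _.
rewrite (eq_bigr (fun k : 'I_N => if (k : nat) == f l then a k * W l else 0)); last first.
  by move=> k _; rewrite eq_sym; case: ifP; rewrite ?mulr0.
by rewrite (sum_if_eq N (f l) (fun k => a k * W l)) hf.
Qed.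


Lemma part1 (n p : nat) (alpha : 'I_p.+1 -> R) (j : 'I_n) : (p.+1 <= n)%N ->
  (Toep n alpha + Hank n alpha) *m uvec R j = lam alpha j *: uvec R j.
Proof.
move=> hpn.
apply/matrixP => i z; rewrite !mxE.
under eq_bigr => l _ do rewrite !mxE.
rewrite /lam.
set c := ((2 * j.+1).-1)%N.
set th := c%:R * pi / (2 * n).+1%:R.
set s := Num.sqrt _.
set a := alphaE alpha.
have hth : forall q : nat, q%:R * c%:R * pi / (2 * n).+1%:R = q%:R * th.
  by move=> q; rewrite /th !mulrA.
under eq_bigr => l _ do rewrite hth.
rewrite hth.
pose w q := sin (q%:R * th).
have -> : \sum_(l < n) (a (i - l + (l - i))%N + (- a (i.+1 + l.+1)%N + a ((2 * n).+1 - i.+1 - l.+1)%N)) *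
    (s * sin (l.+1%:R * th)) = s * (\sum_(l < n) a (i - l + (l - i))%N * w l.+1
      - \sum_(l < n) a (i.+1 + l.+1)%N * w l.+1 + \sum_(l < n) a ((2 * n).+1 - i.+1 - l.+1)%N * w l.+1).
  rewrite -sumrB -big_split mulr_sumr; apply: eq_bigr => l _ /=; rewrite /w; ring.
rewrite (@swap n (2 * n).+1 a (fun l => (i - l + (l - i))%N) (fun l => w l.+1)); last by move=> l hl; move: (ltn_ord i); lia.
rewrite (@swap n (2 * n).+1 a (fun l => (i.+1 + l.+1)%N) (fun l => w l.+1)); last by move=> l hl; move: (ltn_ord i); lia.
rewrite (@swap n (2 * n).+1 a (fun l => ((2 * n).+1 - i.+1 - l.+1)%N) (fun l => w l.+1)); last by move=> l hl; move: (ltn_ord i); lia.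
rewrite -sumrB -big_split /=.
rewrite (eq_bigr (fun k : 'I_(2 * n).+1 => a k * C n w i k)); last by move=> k _; rewrite /C; ring.
rewrite big_ord_recl /= coef0 //.
rewrite (eq_bigr (fun k : 'I_(2 * n) => a k.+1 * C n w i k.+1)) //.
rewrite -(big_mkord xpredT (fun k => a k.+1 * C n w i k.+1)).
rewrite (@big_cat_nat _ _ _ p) //=; last lia.
have -> : \sum_(p <= k < 2 * n) a k.+1 * C n w i k.+1 = 0.
  rewrite big_nat_cond big1 // => k /andP[/andP[hk _] _].
  by rewrite /a alphaE_gt ?mul0r //; lia.
rewrite addr0 big_mkord /gsym -/a big_add1 /= big_mkord.
have hw0 : w 0%N = 0 by rewrite /w mul0r sin0.
have hc : odd c by rewrite /c (_ : ((2 * j.+1).-1 = (2 * j).+1)%N) /= ?oddM //; lia.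
have hws : forall q, (q <= (2 * n).+1)%N -> w ((2 * n).+1 - q)%N = w q.
  by move=> q hq; rewrite /w /th w_sym.
rewrite (eq_bigr (fun k : 'I_p => 2 * (a k.+1 * cos (k.+1%:R * th)) * sin (i.+1%:R * th))); last first.
  move=> k _; rewrite (@coefk n w hw0 hws) //; last by move: (ltn_ord k); lia.
  rewrite /w trig_k; ring.
rewrite -mulr_suml -mulr_sumr /w; ring.
Qed.


Lemma tele (x : R) (N : nat) :
  2 * sin x * \sum_(i < N) cos (i.+1%:R * (2 * x)) = sin ((2 * N).+1%:R * x) - sin x.
Proof.
elim: N => [|N IH]; first by rewrite big_ord0 mulr0 muln0 mul1r subrr.
rewrite big_ord_recr /= mulrDr IH.
have e1 : ((2 * N.+1).+1)%:R * x = N.+1%:R * (2 * x) + x.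
  by rewrite -addn1 natrD natrM -addn1 natrD; ring.
have e2 : ((2 * N).+1)%:R * x = N.+1%:R * (2 * x) - x.
  by rewrite -addn1 natrD natrM -addn1 natrD; ring.
rewrite e1 e2 sinB sinD; ring.
Qed.

Lemma sumcos (x : R) (N : nat) : sin x != 0 -> sin ((2 * N).+1%:R * x) = 0 ->
  \sum_(i < N) cos (i.+1%:R * (2 * x)) = - (1 / 2).
Proof.
move=> hx h0; have := tele x N; rewrite h0 sub0r => h.
apply: (mulfI (x := 2 * sin x)); first by rewrite mulf_neq0.
by rewrite h; field.
Qed.

Lemma prod_sin (s u v : R) : s * sin u * (s * sin v) = s ^+ 2 / 2 * (cos (u - v) - cos (u + v)).
Proof. by rewrite cosB cosD; field. Qed.

Lemma sin_pos (m r : nat) : (0 < r)%N -> (r < (2 * m).+1)%N ->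
  0 < sin (r%:R * (pi / (2 * m).+1%:R)) :> R.
Proof.
move=> h1 h2; apply: sin_gt0_pi; apply/andP; split.
  by apply: mulr_gt0; [rewrite ltr0n | apply: divr_gt0; [exact: pi_gt0 | rewrite ltr0n]].
rewrite mulrA ltr_pdivrMr ?ltr0n // [pi * _]mulrC ltr_pM2r ?ltr_nat //; exact: pi_gt0.
Qed.

Lemma Dh (m : nat) (r : R) : (2 * m).+1%:R * (r * (pi / (2 * m).+1%:R)) = r * pi.
Proof. by rewrite mulrCA [_%:R * _]mulrC divfK // pnatr_eq0. Qed.


Lemma ortho (n : nat) (j k : 'I_n) :
  \sum_(i < n) uvec R j i 0 * uvec R k i 0 = (j == k)%:R.
Proof.
pose h : R := pi / (2 * n).+1%:R.
pose x1 : R := (j%:R - k%:R) * h. pose x2 : R := (j%:R + k%:R + 1) * h.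
have hc : forall q : nat, ((2 * q.+1).-1)%:R = 2 * q%:R + 1 :> R.
  move=> q; rewrite (_ : ((2 * q.+1).-1 = (2 * q) + 1)%N); last lia.
  by rewrite natrD natrM.
rewrite (eq_bigr (fun i : 'I_n => Num.sqrt (4 / (2 * n).+1%:R) ^+ 2 / 2 *
   (cos (i.+1%:R * (2 * x1)) - cos (i.+1%:R * (2 * x2))))); last first.
  move=> i _; rewrite !mxE prod_sin; congr (_ * (cos _ - cos _)); rewrite /x1 /x2 /h !hc; ring.
rewrite -mulr_sumr sumrB.
have hx2 : x2 = (j + k + 1)%N%:R * h by rewrite /x2 !natrD.
have s2a : sin x2 != 0.
  by apply/negbT/gt_eqF; rewrite hx2; apply: sin_pos; move: (ltn_ord j) (ltn_ord k); lia.
have s2b : sin ((2 * n).+1%:R * x2) = 0 by rewrite hx2 /h Dh sin_natpi.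
rewrite (@sumcos x2 n s2a s2b).
have hD : (2 * n).+1%:R != 0 :> R by rewrite pnatr_eq0.
rewrite sqr_sqrtr; last by rewrite divr_ge0 // ler0n.
have [hjk0|hjk] := eqVneq j k.
  rewrite /x1 hjk0 subrr mul0r mulr0.
  under eq_bigr => i _ do rewrite mulr0 cos0.
  rewrite sumr_const card_ord /=.
  have hn : n%:R = ((2 * n).+1%:R - 1) / 2 :> R.
    rewrite -addn1 natrD natrM; lra.
  rewrite -[(1 *+ n)]/(n%:R) hn; field.
  have := @ler0n R n; move=> ?; apply/negbT/gt_eqF; lra.
have s1a : sin x1 != 0.
  have [hlt|hgt|heq] := ltngtP j k.
  - have -> : x1 = - ((k - j)%N%:R * h) by rewrite /x1 natrB ?(ltnW hlt) //; ring.
    rewrite sinN oppr_eq0; apply/negbT/gt_eqF; apply: sin_pos; move: (ltn_ord k); lia.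
  - have -> : x1 = (j - k)%N%:R * h by rewrite /x1 natrB ?(ltnW hgt).
    apply/negbT/gt_eqF; apply: sin_pos; move: (ltn_ord j); lia.
  - by move: hjk; rewrite (val_inj heq) eqxx.
have s1b : sin ((2 * n).+1%:R * x1) = 0.
  by rewrite /x1 /h Dh mulrBl sinB !sin_natpi mul0r mulr0 subr0.
by rewrite (@sumcos x1 n s1a s1b) subrr mulr0.
Qed.

End Aux.

Theorem mainTheorem9 (R : realType) (n p : nat) (alpha : 'I_p.+1 -> R) :
  (1 <= p)%N -> (p.+1 <= n)%N ->
  (forall j : 'I_n,
     (Toep n alpha + Hank n alpha) *m uvec R j = lam alpha j *: uvec R j)
  /\ (forall a : R, is_eigenvalue (Toep n alpha + Hank n alpha) a ->
        exists j : 'I_n, a = lam alpha j).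
Proof.
move=> hp hpn; split; first by move=> j; apply: part1.
move=> a [v hv0 hAv].
set A := Toep n alpha + Hank n alpha in hAv *.
pose U : 'M[R]_n := \matrix_(i, j) uvec R j i 0.
pose d : 'rV[R]_n := \row_j lam alpha j.
have hUU : U^T *m U = 1%:M.
  apply/matrixP => j k; rewrite [LHS]mxE [RHS]mxE -(@ortho R n j k).
  by apply: eq_bigr => i _; rewrite !mxE.
have hUU' : U *m U^T = 1%:M by apply: mulmx1C.
have hAU : A *m U = U *m diag_mx d.
  apply/matrixP => i j; rewrite mul_mx_diag !mxE.
  have := congr1 (fun M : 'cV[R]_n => M i 0) (@part1 R n p alpha j hpn); rewrite !mxE => e.
  rewrite mulrC -e; apply: eq_bigr => l _; rewrite !mxE.
  done.
set c := U^T *m v.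
have hv : v = U *m c by rewrite /c mulmxA hUU' mul1mx.
have e : A *m v = U *m (diag_mx d *m c) by rewrite hv mulmxA hAU -mulmxA.
have hDc : diag_mx d *m c = a *: c.
  by rewrite -[diag_mx d *m c]mul1mx -hUU -mulmxA -e hAv -scalemxAr.
clearbody c.
have [j hj] : exists j : 'I_n, c j 0 != 0.
  apply/existsP; apply: contraNT hv0 => /existsPn h.
  rewrite hv (_ : c = 0) ?mulmx0 //.
  apply/matrixP => i z; rewrite (ord1 z) mxE; apply/eqP; move: (h i); rewrite negbK.
  done.
exists j; have := congr1 (fun M : 'cV[R]_n => M j 0) hDc; rewrite mul_diag_mx !mxE => h.
by apply: (mulIf hj); rewrite h.
Qed.
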